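(* Let $L$ be a sublattice of $A_n$ of rank $n$, let $v\in H_0$, and put $h=h_{\triangle,L}(v)$. Consider the simplex $S(v)=\{u\in H_0: u_j\ge v_j-h\ \forall j\}$ and its facets $F_i=\{u\in S(v): u_i=v_i-h\}$, $i=0,\dots,n$. Then $v\in\mathrm{Crit}(L)$ if and only if for each $i\in\{0,\dots,n\}$ there exists $p_i\in L$ with $p_i\in F_i$ and $p_i\notin F_j$ for all $j\neq i$. In particular, every $v\in\mathrm{Crit}(L)$ lies in the intersection $V_\triangle(p_0)\cap\dots\cap V_\triangle(p_n)$ of $n+1$ Voronoi cells of distinct points $p_0,\dots,p_n\in L$.
   Context: Let $n\ge 1$, $H_0=\{x\in\mathbb R^{n+1}:\sum_i x_i=0\}$ and $A_n=H_0\cap\mathbb Z^{n+1}$. For $p,q\in H_0$ let $d_\triangle(p,q)=\max_i(p_i-q_i)$, and for $x\in H_0$ let $h_{\triangle,L}(x)=\min_{p\in L}d_\triangle(x,p)$. $\mathrm{Crit}(L)$ denotes the set of points of $H_0$ that are local maxima of $h_{\triangle,L}$ on $H_0$. For $p\in L$, the Voronoi cell is $V_\triangle(p)=\{x\in H_0: d_\triangle(x,p)\le d_\triangle(x,p')\ \forall p'\in L\}$. *)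

(* Defs.v *)
From Stdlib Require Import Reals ZArith ClassicalEpsilon.
From mathcomp Require Import all_boot.
Set Implicit Arguments.
Unset Strict Implicit.
Unset Printing Implicit Defensive.
Local Open Scope R_scope.

(* A point of R^{n+1}: coordinates indexed by 'I_(n.+1) = {0,...,n}. *)
Definition pt (n : nat) := 'I_n.+1 -> R.

Definition H0 (n : nat) (x : pt n) : Prop :=
  \big[Rplus/R0]_(i < n.+1) x i = R0.

Definition dtri (n : nat) (p q : pt n) : R :=
  \big[Rmax/(p ord0 - q ord0)]_(i < n.+1) (p i - q i).

Definition integral_pt (n : nat) (x : pt n) : Prop :=
  forall i, exists z : Z, x i = IZR z.

Definition sublattice_An (n : nat) (L : pt n -> Prop) : Prop :=
  L (fun _ => R0) /\
  (forall p q, L p -> L q -> L (fun i => (p i - q i))) /\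
  (forall p, L p -> integral_pt p /\ H0 p).

Definition rank_n (n : nat) (L : pt n -> Prop) : Prop :=
  exists b : 'I_n -> pt n,
    (forall k, L (b k)) /\
    (forall c : 'I_n -> R,
        (forall j, \big[Rplus/R0]_(k < n) (c k * b k j) = R0) ->
        forall k, c k = R0).

(* h_{tri,L}(x) = min_{p in L} d_tri(x,p)  (the minimum is attained since L is
   discrete; we pick it with Hilbert's epsilon). *)
Definition is_hmin (n : nat) (L : pt n -> Prop) (x : pt n) (m : R) : Prop :=
  (exists p, L p /\ dtri x p = m) /\ (forall p, L p -> (m <= dtri x p)).

Definition hL (n : nat) (L : pt n -> Prop) (x : pt n) : R :=
  epsilon (inhabits R0) (is_hmin L x).

Definition Crit (n : nat) (L : pt n -> Prop) (v : pt n) : Prop :=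
  H0 v /\
  exists eps : R, (0 < eps) /\
    forall x : pt n, H0 x -> (forall i, (Rabs (x i - v i) < eps)) ->
      (hL L x <= hL L v).

Definition Voronoi (n : nat) (L : pt n -> Prop) (p : pt n) (x : pt n) : Prop :=
  H0 x /\ forall p', L p' -> (dtri x p <= dtri x p').

Definition simplexS (n : nat) (L : pt n -> Prop) (v u : pt n) : Prop :=
  H0 u /\ forall j, (v j - hL L v <= u j).

Definition facetF (n : nat) (L : pt n -> Prop) (v : pt n) (i : 'I_n.+1) (u : pt n) : Prop :=
  simplexS L v u /\ u i = (v i - hL L v).

(* Main.v *)
Require Import Defs.
From HB Require Import structures.
From Stdlib Require Import Reals ZArith ClassicalEpsilon Classical Lra Lia.
From mathcomp Require Import all_boot.
Local Open Scope R_scope.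
HB.instance Definition _ := Monoid.isComLaw.Build R R0 Rplus (fun a b c => esym (Rplus_assoc a b c)) Rplus_comm Rplus_0_l.
HB.instance Definition _ := Monoid.isComLaw.Build Z 0%Z Z.add Z.add_assoc Z.add_comm Z.add_0_l.

Lemma ip_le r : IZR (Int_part r) <= r.
Proof. by have [] := base_Int_part r. Qed.
Lemma ip_gt r : r < IZR (Int_part r) + 1.
Proof. have [] := base_Int_part r; lra. Qed.
Lemma ip_max z r : IZR z <= r -> (z <= Int_part r)%Z.
Proof.
move=> H; have H1 := ip_gt r.
have : IZR z < IZR (Int_part r + 1) by rewrite plus_IZR; lra.
move/lt_IZR; lia.
Qed.
Lemma ip_mono r s : r <= s -> (Int_part r <= Int_part s)%Z.
Proof. move=> H; apply: ip_max; have := ip_le r; lra. Qed.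
Lemma ip_strict r z : r < IZR z -> (Int_part r < z)%Z.
Proof. move=> H; apply: lt_IZR; have := ip_le r; lra. Qed.
Lemma ip_IZR z : Int_part (IZR z) = z.
Proof.
have H1 := ip_max z (IZR z) (Rle_refl _).
have /le_IZR H2 := ip_le (IZR z).
lia.
Qed.

Section S.
Variable n : nat.

Lemma dtri_ge (x p : pt n) k : x k - p k <= dtri x p.
Proof.
rewrite /dtri.
have : k \in index_enum 'I_n.+1 by rewrite mem_index_enum.
elim: (index_enum _) => [//|a r IH]; rewrite big_cons inE => /orP [/eqP ->|/IH H].
  by apply: Rmax_l.
by apply: Rle_trans H (Rmax_r _ _).
Qed.

Lemma dtri_le (x p : pt n) t : (forall k, x k - p k <= t) -> dtri x p <= t.
Proof.
move=> H; rewrite /dtri; apply: (big_ind (fun y => y <= t)) => //.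
by move=> a b Ha Hb; apply: Rmax_lub.
Qed.

Lemma dtri_ex (x p : pt n) : exists k, dtri x p = x k - p k.
Proof.
rewrite /dtri; apply: (big_ind (fun y => exists k, y = x k - p k)).
- by exists ord0.
- move=> a b [k1 ->] [k2 ->]; rewrite /Rmax; by case: Rle_dec => _; [exists k2 | exists k1].
- by move=> i _; exists i.
Qed.

Lemma sum_pos (F : 'I_n.+1 -> R) : (forall i, 0 < F i) -> 0 < \big[Rplus/R0]_(i < n.+1) F i.
Proof.
move=> H; rewrite big_ord_recr /=.
have : 0 <= \big[Rplus/R0]_(i < n) F (widen_ord (leqnSn n) i).
  apply: (big_ind (fun y => 0 <= y)).
  - lra.
  - move=> a b ? ?; lra.
  - move=> i _; apply: Rlt_le; apply: H.
move=> Hs; apply: Rplus_le_lt_0_compat => //.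
Qed.

Lemma sum0_ex (F : 'I_n.+1 -> R) : \big[Rplus/R0]_(i < n.+1) F i = 0 -> exists i, F i <= 0.
Proof.
move=> H; apply: NNPP => Hn; have: 0 < \big[Rplus/R0]_(i < n.+1) F i.
  apply: sum_pos => i; apply: Rnot_le_lt => Hi; apply: Hn; by exists i.
lra.
Qed.

Lemma sumB (F G : 'I_n.+1 -> R) : \big[Rplus/R0]_(i < n.+1) (F i - G i) =
  \big[Rplus/R0]_(i < n.+1) F i - \big[Rplus/R0]_(i < n.+1) G i.
Proof.
rewrite /Rminus big_split /=; congr (_ + _).
apply: esym; apply: (big_morph Ropp) => [a b|]; [apply: Ropp_plus_distr | apply: Ropp_0].
Qed.

Lemma sum_const (c : R) : \big[Rplus/R0]_(i < n.+1) c = INR n.+1 * c.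
Proof.
rewrite big_const_ord; elim: n.+1 => [/=|m IH]; first lra.
rewrite S_INR /= IH; lra.
Qed.

Lemma sum_delta (i : 'I_n.+1) (c : R) : \big[Rplus/R0]_(j < n.+1) (if j == i then c else 0) = c.
Proof.
rewrite (bigD1 i) //= eqxx big1 ?Rplus_0_r // => j /negbTE ->; done.
Qed.
End S.
Arguments dtri_ge {n}. Arguments dtri_le {n}. Arguments dtri_ex {n}. Arguments sum_pos {n}. Arguments sum0_ex {n}. Arguments sumB {n}. Arguments sum_const {n}. Arguments sum_delta {n}.

Section Ex.
Variables (n : nat) (L : pt n -> Prop) (HL : sublattice_An L).

Lemma L_H0 p : L p -> H0 p.
Proof. by case: HL => _ [_ H] /H []. Qed.
Lemma L_int p : L p -> integral_pt p.
Proof. by case: HL => _ [_ H] /H []. Qed.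

Lemma dtri_nonneg (x p : pt n) : H0 x -> H0 p -> 0 <= dtri x p.
Proof.
move=> Hx Hp.
have : \big[Rplus/R0]_(i < n.+1) (p i - x i) = 0 by rewrite sumB Hx Hp; lra.
case/sum0_ex => k Hk; have := dtri_ge x p k; lra.
Qed.

Variable x : pt n.
Hypothesis Hx : H0 x.

Definition Mz (t : R) : Z := \big[Z.add/0%Z]_(j < n.+1) Int_part (t - x j).

Lemma Mz_mono t t' : t <= t' -> (Mz t <= Mz t')%Z.
Proof.
move=> H; rewrite /Mz; apply: (big_ind2 Z.le); [lia | move=> *; lia | ].
move=> i _; apply: ip_mono; lra.
Qed.

Lemma Mz_strict t t' k z : t' < t -> t - x k = IZR z -> (Mz t' < Mz t)%Z.
Proof.
move=> H Hz; rewrite /Mz (bigD1 k) //= (bigD1 k (P := xpredT)) //=.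
apply: Z.add_lt_le_mono.
  rewrite Hz ip_IZR; apply: ip_strict; lra.
apply: (big_ind2 Z.le); [lia | move=> *; lia | ].
move=> i _; apply: ip_mono; lra.
Qed.

Lemma hmin_step p : L p -> (exists m, is_hmin L x m) \/
  exists p', L p' /\ (Mz 0 <= Mz (dtri x p') < Mz (dtri x p))%Z.
Proof.
move=> Lp.
case: (classic (forall p', L p' -> dtri x p <= dtri x p')) => Hmin.
  left; exists (dtri x p); split => //; by exists p; split.
right; have [p' Hp'] := not_all_ex_not _ _ Hmin.
have [Lp' Hlt'] := imply_to_and _ _ Hp'.
have Hlt := Rnot_le_lt _ _ Hlt'.
have [k Hk] := dtri_ex x p.
have [z Hz] := L_int p Lp k.
have Hs : (Mz (dtri x p') < Mz (dtri x p))%Z by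
     apply: (Mz_strict _ _ k (- z)%Z) => //; rewrite Hk Hz opp_IZR; ring.
have H0' : (Mz 0 <= Mz (dtri x p'))%Z by apply: Mz_mono; apply: dtri_nonneg => //; apply: L_H0.
exists p'; split => //; lia.
Qed.

Lemma hmin_ind N : forall p, L p -> (Mz (dtri x p) - Mz 0 <= Z.of_nat N)%Z ->
  exists m, is_hmin L x m.
Proof.
elim: N => [|N IH] p Lp HN; (case: (hmin_step p Lp) => [//|[p' [Lp' Hs]]]).
- lia.
- apply: (IH p') => //; lia.
Qed.

Lemma hmin_exists : exists m, is_hmin L x m.
Proof.
case: HL => L0 _.
apply: (hmin_ind (Z.to_nat (Mz (dtri x (fun _ => R0)) - Mz 0)) _ L0); lia.
Qed.

Lemma hL_spec : is_hmin L x (hL L x).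
Proof. by rewrite /hL; apply: epsilon_spec; apply: hmin_exists. Qed.
End Ex.

Lemma bigmin_le n (F : 'I_n.+1 -> R) a k : \big[Rmin/a]_(i < n.+1) F i <= F k.
Proof.
have : k \in index_enum 'I_n.+1 by rewrite mem_index_enum.
elim: (index_enum _) => [//|b r IH]; rewrite big_cons inE => /orP [/eqP ->|/IH H].
  by apply: Rmin_l.
by apply: Rle_trans (Rmin_r _ _) H.
Qed.

Lemma bigmin_pos n (F : 'I_n.+1 -> R) a : 0 < a -> (forall i, 0 < F i) ->
  0 < \big[Rmin/a]_(i < n.+1) F i.
Proof.
move=> Ha HF; apply: (big_ind (fun y => 0 < y)) => //.
by move=> y1 y2 H1 H2; apply: Rmin_glb_lt.
Qed.

Section Main.
Variables (n : nat) (L : pt n -> Prop) (HL : sublattice_An L) (v : pt n) (Hv : H0 v).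

Let h := hL L v.

Lemma crit_of_facets :
  (forall i : 'I_n.+1, exists p : pt n,
       L p /\ facetF L v i p /\ (forall j : 'I_n.+1, j <> i -> ~ facetF L v j p)) ->
  Crit L v.
Proof.
move=> H.
pose P i p := L p /\ facetF L v i p /\ (forall j : 'I_n.+1, j <> i -> ~ facetF L v j p).
pose ps i := epsilon (inhabits (fun _ : 'I_n.+1 => R0)) (P i).
have Hps i : P i (ps i) by apply: epsilon_spec; apply: H.
pose gap i j := if i == j then 1 else h - (v j - ps i j).
have gap_pos i j : 0 < gap i j.
  rewrite /gap; case: eqP => [_|Hij]; first lra.
  have [_ [[[_ Hs] _] Hn]] := Hps i.
  have := Hs j; rewrite -/h => Hj.
  case: (Rle_lt_or_eq_dec _ _ Hj) => Hj'; first lra.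
  exfalso; apply: (Hn j) => [Hji|]; first by apply: Hij.
  have [_ [[Hs' _] _]] := Hps i; split => //; rewrite -/h; lra.
pose eps := \big[Rmin/1]_(i < n.+1) \big[Rmin/1]_(j < n.+1) gap i j.
have eps_pos : 0 < eps by apply: bigmin_pos => [|i]; [lra | apply: bigmin_pos => //; lra].
have eps_le i j : eps <= gap i j.
  apply: Rle_trans (bigmin_le _ _ _ i) _; apply: bigmin_le.
split => //; exists eps; split => // x Hx Hclose.
have : \big[Rplus/R0]_(i < n.+1) (x i - v i) = 0 by rewrite sumB Hx Hv; lra.
case/sum0_ex => i Hi.
have [_ Hxmin] := @hL_spec _ _ HL _ Hx.
have [Lps [[_ Hpsi] _]] := Hps i.
apply: Rle_trans (Hxmin _ Lps) _; apply: dtri_le => k.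
case: (eqVneq k i) => [->|Hki].
  rewrite Hpsi -/h; lra.
have := eps_le i k; rewrite /gap; case: eqP => [Hik|_]; first by rewrite Hik eqxx in Hki.
have := Hclose k; have := Rle_abs (x k - v k); rewrite -/h; lra.
Qed.

Lemma facets_of_crit : Crit L v ->
  forall i : 'I_n.+1, exists p : pt n,
       L p /\ facetF L v i p /\ (forall j : 'I_n.+1, j <> i -> ~ facetF L v j p).
Proof.
case=> _ [eps [Heps Hloc]] i.
pose c := v i - h.
pose k := Int_part c.
pose gap := if Rlt_dec (IZR k) c then Rmin 1 (c - IZR k) else 1.
have gap_pos : 0 < gap.
  rewrite /gap; case: Rlt_dec => Hk /=; last lra.
  apply: Rmin_glb_lt; lra.
pose E := Rmin eps gap / 2.
have HE1 : 0 < E by rewrite /E; have := Rmin_glb_lt _ _ _ Heps gap_pos; lra.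
have HE2 : E < eps by rewrite /E; have := Rmin_l eps gap; lra.
have HE3 : E < gap by rewrite /E; have := Rmin_r eps gap; lra.
have HN : 1 <= INR n.+1 by apply: (le_INR 1); apply/leP.
pose d := E / INR n.+1.
have Hd1 : 0 < d by apply: Rdiv_lt_0_compat; lra.
have HdE : INR n.+1 * d = E by rewrite /d; field; lra.
have Hd2 : d <= E by rewrite -HdE; have := Rmult_le_compat_r d _ _ (Rlt_le _ _ Hd1) HN; lra.
pose x (j : 'I_n.+1) := v j + (d - (if j == i then E else 0)).
have Hx : H0 x.
  rewrite /H0 /x big_split /= Hv sumB sum_const sum_delta; lra.
have Hclose : forall j, Rabs (x j - v j) < eps.
  move=> j; rewrite /x; apply: Rabs_def1; case: (j == i); lra.
have hx := Hloc x Hx Hclose.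
have [[q [Lq Hq]] _] := @hL_spec _ _ HL _ Hx.
have [_ Hvmin] := @hL_spec _ _ HL _ Hv.
have Hvq := Hvmin q Lq; rewrite -/h in Hvq hx.
have Hxq j : x j - q j <= h by have := dtri_ge x q j; lra.
have Hoth j : j <> i -> v j - q j < h.
  move=> Hji; have := Hxq j; rewrite /x; move/eqP/negbTE: Hji => ->; lra.
have Hqi1 : h <= v i - q i.
  have [m Hm] := dtri_ex v q.
  case: (eqVneq m i) => [Hmi|Hmi]; first by rewrite -Hmi; lra.
  have := Hoth m (fun e => (negP Hmi) (introT eqP e)); lra.
have Hqi2 : c - E < q i.
  have := Hxq i; rewrite /x eqxx /c; lra.
have [z Hz] := @L_int _ _ HL q Lq i.
have Hzk : (z <= k)%Z by apply: ip_max; rewrite -Hz /c; lra.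
have Hkc := ip_le c; rewrite -/k in Hkc.
have Hqc : q i = c.
  move: HE3; rewrite /gap; case: Rlt_dec => Hk /= HE3.
    have := Rmin_r 1 (c - IZR k); have /IZR_le := Hzk; lra.
  have Hkc' : IZR k = c by lra.
  have : IZR (k - 1) < IZR z by rewrite minus_IZR -Hz; lra.
  move/lt_IZR => Hzk2; have Ezk : z = k by lia.
  by rewrite Hz Ezk.
exists q; split => //; split.
  split; last by rewrite Hqc.
  split; first by apply: (@L_H0 _ _ HL).
  move=> j; rewrite -/h; case: (eqVneq j i) => [->|Hji]; first by rewrite Hqc /c; lra.
  have := Hoth j (fun e => (negP Hji) (introT eqP e)); lra.
move=> j Hji [_ Hqj]; have := Hoth j Hji; rewrite Hqj -/h; lra.
Qed.

End Main.

Theorem mainTheorem13 (n : nat) (hn : (1 <= n)%N) (L : pt n -> Prop)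
  (HL : sublattice_An L) (Hrank : rank_n L) (v : pt n) (Hv : H0 v) :
  (Crit L v <->
     forall i : 'I_n.+1, exists p : pt n,
       L p /\ facetF L v i p /\ (forall j : 'I_n.+1, j <> i -> ~ facetF L v j p))
  /\
  (Crit L v ->
     exists ps : 'I_n.+1 -> pt n,
       (forall i j, ps i = ps j -> i = j) /\
       (forall i, L (ps i) /\ Voronoi L (ps i) v)).
Proof.
split; first by split; [apply: facets_of_crit | apply: crit_of_facets].
move=> Hc; have H := @facets_of_crit _ _ HL _ Hv Hc.
pose P i p := L p /\ facetF L v i p /\ (forall j : 'I_n.+1, j <> i -> ~ facetF L v j p).
pose ps i := epsilon (inhabits (fun _ : 'I_n.+1 => R0)) (P i).
have Hps i : P i (ps i) by apply: epsilon_spec; apply: H.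
exists ps; split.
  move=> i j Hij; apply: NNPP => Hne.
  have [_ [Fi Hn]] := Hps i; have [_ [Fj _]] := Hps j.
  by apply: (Hn j) => //; [move=> e; apply: Hne | rewrite Hij].
move=> i; have [Lp [[[_ Hs] _] _]] := Hps i; split => //; split => // p' Lp'.
have [_ Hvmin] := @hL_spec _ _ HL _ Hv.
apply: Rle_trans (Hvmin _ Lp'); apply: dtri_le => k; have := Hs k; lra.
Qed.
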